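(* Let $q\neq-1$ be real and $n\ge1$. Then $$T_n(x,s,q)\,T_n(x,qs,q)-(x^2+qs)\,U_{n-1}(x,qs,q)\,U_{n-1}(x,q^2s,q)=q^{\binom{n+1}{2}}(-s)^n.$$
   Context: $T_0=1$, $T_1=x$, $T_n(x,s,q)=(1+q^{n-1})x\,T_{n-1}(x,s,q)+q^{n-1}s\,T_{n-2}(x,s,q)$ for $n\ge2$; $U_{-1}=0$, $U_0=1$, $U_n(x,s,q)=(1+q^{n})x\,U_{n-1}(x,s,q)+q^{n-1}s\,U_{n-2}(x,s,q)$ for $n\ge1$. *)

(* Defs.v *)
From HB Require Import structures.
From mathcomp Require Import all_boot all_order all_algebra.
Set Implicit Arguments. Unset Strict Implicit. Unset Printing Implicit Defensive.
Import Order.TTheory GRing.Theory Num.Theory.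
Local Open Scope ring_scope.

Fixpoint Tpoly {R : realFieldType} (x s q : R) (n : nat) : R :=
  match n with
  | 0%N => 1
  | 1%N => x
  | (S k as m).+1 =>
      (1 + q ^+ m) * x * Tpoly x s q m + q ^+ m * s * Tpoly x s q k
  end.

(* Ushift n = U_(n-1):  U_(-1) = 0, U_0 = 1,
   U_n = (1+q^n) x U_(n-1) + q^(n-1) s U_(n-2)  (n >= 1), i.e.
   Ushift (k+2) = (1+q^(k+1)) x Ushift (k+1) + q^k s Ushift k. *)
Fixpoint Ushift {R : realFieldType} (x s q : R) (n : nat) : R :=
  match n with
  | 0%N => 0
  | 1%N => 1
  | (S k as m).+1 =>
      (1 + q ^+ m) * x * Ushift x s q m + q ^+ k * s * Ushift x s q k
  end.

Definition Upoly {R : realFieldType} (x s q : R) (n : nat) : R := Ushift x s q n.+1.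

(* Main.v *)
Require Import Defs.
From HB Require Import structures.
From mathcomp Require Import all_boot all_order all_algebra.
From mathcomp Require Import ring.
Import Order.TTheory GRing.Theory Num.Theory.
Local Open Scope ring_scope.

Lemma key (R : realFieldType) (q x s : R) (m : nat) :
  let A := Tpoly x s q in let B := Tpoly x (q * s) q in
  let C := Ushift x (q * s) q in let D := Ushift x (q ^+ 2 * s) q in
  let K := x ^+ 2 + q * s in
  let r k := q ^+ 'C(k.+1, 2) * (- s) ^+ k in
  [/\ A m.+1 * B m.+1 - K * C m.+1 * D m.+1 = r m.+1,
      A m.+1 * B m - K * C m.+1 * D m = x * q ^+ m * r m,
      A m * B m.+1 - K * C m * D m.+1 = x * r m &
      A m * B m - K * C m * D m = r m].
Proof.
move=> A B C D K r.
have rS : forall k, r k.+1 = - (q ^+ k.+1 * s) * r k.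
  move=> k; rewrite /r binS bin1 exprD !exprS; ring.
elim: m => [|m [h0 h1 h2 h3]].
  rewrite /A /B /C /D /K rS /r /=. split; ring.
have eA : A m.+2 = (1 + q ^+ m.+1) * x * A m.+1 + q ^+ m.+1 * s * A m by [].
have eB : B m.+2 = (1 + q ^+ m.+1) * x * B m.+1 + q * (q ^+ m.+1 * s) * B m.
  rewrite /B /=; ring.
have eC : C m.+2 = (1 + q ^+ m.+1) * x * C m.+1 + q ^+ m.+1 * s * C m.
  rewrite /C /= !exprS; ring.
have eD : D m.+2 = (1 + q ^+ m.+1) * x * D m.+1 + q * (q ^+ m.+1 * s) * D m.
  rewrite /D /= !exprS; ring.
set a := (1 + q ^+ m.+1) * x in eA eB eC eD.
set b := q ^+ m.+1 * s in eA eB eC eD.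
set L0 := A m.+1 * B m.+1 - K * C m.+1 * D m.+1 in h0.
set L1 := A m.+1 * B m - K * C m.+1 * D m in h1.
set L2 := A m * B m.+1 - K * C m * D m.+1 in h2.
set L3 := A m * B m - K * C m * D m in h3.
have rr : r m.+2 = (- (q * b)) * (- b) * r m by rewrite !rS /b !exprS; ring.
have r1 : r m.+1 = - b * r m by rewrite rS.
split.
- rewrite eA eB eC eD.
  have -> : (a * A m.+1 + b * A m) * (a * B m.+1 + q * b * B m) -
     K * (a * C m.+1 + b * C m) * (a * D m.+1 + q * b * D m)
     = a^+2 * L0 + a * q * b * L1 + a * b * L2 + q * b ^+ 2 * L3
     by rewrite /L0 /L1 /L2 /L3; ring.
  rewrite h0 h1 h2 h3 rr r1 /a /b !exprS; ring.
- rewrite eA eC.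
  have -> : (a * A m.+1 + b * A m) * B m.+1 - K * (a * C m.+1 + b * C m) * D m.+1
     = a * L0 + b * L2 by rewrite /L0 /L2; ring.
  rewrite h0 h2 r1 /a /b !exprS; ring.
- rewrite eB eD.
  have -> : A m.+1 * (a * B m.+1 + q * b * B m) - K * C m.+1 * (a * D m.+1 + q * b * D m)
     = a * L0 + q * b * L1 by rewrite /L0 /L1; ring.
  rewrite h0 h1 r1 /a /b !exprS; ring.
- exact: h0.
Qed.

Theorem theorem2p10 (R : realFieldType) (q x s : R) (n : nat) :
  q != -1 -> (1 <= n)%N ->
  Tpoly x s q n * Tpoly x (q * s) q n
  - (x ^+ 2 + q * s) * Upoly x (q * s) q n.-1 * Upoly x (q ^+ 2 * s) q n.-1
  = q ^+ 'C(n.+1, 2) * (- s) ^+ n.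
Proof.
move=> _; case: n => [//|m] _ /=.
by case: (@key _ q x s m) => h _ _ _; rewrite /Upoly -mulrA mulrA.
Qed.
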